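(* For every integer $n\geq 3$ there exists a number $m=f(n)$ such that the following holds for every positive integer $p$: if a graph $G$ contains a subgraph $C$ isomorphic to $C_{p,m}$ and three pairwise edge-disjoint trees $T_a,T_b,T_c$, each of which contains every vertex of $C$ and is edge-disjoint from $C$, then $C\cup T_a\cup T_b\cup T_c$ contains $C_{p+1,n}$ as an immersion.
   Context: All graphs are finite and loopless but may have parallel edges. $C_{t,r}$ denotes the graph obtained from a cycle on $r$ vertices by replacing each edge by $t$ parallel edges. Lifting a pair of adjacent edges $uv,vw$ means deleting them and adding a new edge $uw$ (if $u=w$ the loop is deleted). A graph $H$ is an immersion of $G$ if a graph isomorphic to $H$ can be obtained from a subgraph of $G$ by repeatedly lifting pairs of edges; equivalently, there is an injective map $V(H)\to V(G)$ and pairwise edge-disjoint paths of $G$ joining the images of the ends of each edge of $H$. *)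

(* Defs.v *)
From mathcomp Require Import all_boot.
Set Implicit Arguments. Unset Strict Implicit. Unset Printing Implicit Defensive.

Section MultiGraph.
Variables (V E : finType) (src dst : E -> V).

Definition joins (e : E) (x y : V) : bool :=
  ((src e == x) && (dst e == y)) || ((src e == y) && (dst e == x)).

Definition loopless : Prop := forall e : E, src e != dst e.

Fixpoint is_walk (x y : V) (s : seq (E * V)) : bool :=
  match s with
  | [::] => x == y
  | (e, v) :: s' => joins e x v && is_walk v y s'
  end.

Definition is_path_in (S : {set E}) (x y : V) (s : seq (E * V)) : bool :=
  [&& is_walk x y s, uniq (x :: map snd s) & all (fun st => st.1 \in S) s].

(* (phi, EC) is a subgraph isomorphic to C_{t,r} (r >= 3): phi injectively
   maps the cycle vertices 0..r-1, EC consists of edges joining consecutive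
   cycle vertices phi i, phi (i+1 mod r), with exactly t such edges per pair. *)
Definition is_Ctr_copy (t r : nat) (phi : 'I_r -> V) (EC : {set E}) : Prop :=
  [/\ injective phi,
      (forall e, e \in EC -> exists i : 'I_r, joins e (phi i) (phi (ordS i))) &
      (forall i : 'I_r, #|[set e in EC | joins e (phi i) (phi (ordS i))]| = t)].

Definition sub_adj (VT : {set V}) (ET : {set E}) : rel V :=
  fun x y => [&& x \in VT, y \in VT & [exists e in ET, joins e x y]].

Definition sub_connected (VT : {set V}) (ET : {set E}) : Prop :=
  forall x y, x \in VT -> y \in VT -> connect (sub_adj VT ET) x y.

(* (VT, ET) is a subgraph which is a tree: nonempty, connected, and
   minimally connected (every edge is a bridge), i.e. connected and acyclic. *)
Definition is_tree (VT : {set V}) (ET : {set E}) : Prop :=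
  [/\ VT != set0,
      (forall e, e \in ET -> src e \in VT /\ dst e \in VT),
      sub_connected VT ET &
      (forall e, e \in ET -> ~ sub_connected VT (ET :\ e))].

(* C_{t,r} is an immersion of the subgraph with edge set S: an injective map
   of the vertices of C_{t,r} and pairwise edge-disjoint paths in S joining
   the images of the ends of each edge (i,k) (the k-th parallel copy of the
   edge between i and i+1 mod r). *)
Definition immerses_Ctr (t r : nat) (S : {set E}) : Prop :=
  exists (phi : 'I_r -> V) (P : 'I_r * 'I_t -> seq (E * V)),
    [/\ injective phi,
        (forall h : 'I_r * 'I_t, is_path_in S (phi h.1) (phi (ordS h.1)) (P h)) &
        (forall h1 h2 : 'I_r * 'I_t, h1 != h2 ->
           forall e, e \in map fst (P h1) -> e \notin map fst (P h2))].

End MultiGraph.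

(* Main.v *)
Require Import Defs.
From mathcomp Require Import all_boot.
From mathcomp Require Import zify.
Set Implicit Arguments. Unset Strict Implicit. Unset Printing Implicit Defensive.
Section Lam.
Variable m : nat.
Notation T := 'I_m.
Variable F : {set {set T}}.
Implicit Types (X Y D S : {set T}) (h y z w : T).
Hypothesis lamF : forall A B, A \in F -> B \in F ->
  [|| A \subset B, B \subset A | [disjoint A & B]].

Definition upsetin (D Y : {set T}) := forall x y : T, x \in Y -> y \in Y -> x < y -> x \in D -> y \in D.
Definition downsetin (D Y : {set T}) := forall x y : T, x \in Y -> y \in Y -> x < y -> y \in D -> x \in D.
Definition Up (Y : {set T}) := forall D, D \in F -> upsetin D Y \/ #|D :&: Y| <= 1.
Definition Down (Y : {set T}) := forall D, D \in F -> downsetin D Y \/ #|D :&: Y| <= 1.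

Lemma Up_sub (Y Y2 : {set T}) : Up Y -> Y2 \subset Y -> Up Y2.
Proof.
move=> uY sub D DF; case: (uY D DF) => [h|h].
  by left=> x y xY yY; apply: h; apply: (subsetP sub).
right; apply: leq_trans h; apply: subset_leq_card; exact: setIS.
Qed.

Lemma Down_sub (Y Y2 : {set T}) : Down Y -> Y2 \subset Y -> Down Y2.
Proof.
move=> uY sub D DF; case: (uY D DF) => [h|h].
  by left=> x y xY yY; apply: h; apply: (subsetP sub).
right; apply: leq_trans h; apply: subset_leq_card; exact: setIS.
Qed.

Definition PT (X : {set T}) (h : T) :=
  [set D :&: X | D in [set D in F | (h \in D) && ~~ (X \subset D)]].

Definition U (X : {set T}) (h : T) : {set T} :=
  if [pick T0 in PT X h] is Some T0 then [arg max_(S > T0 in PT X h) #|S|] else [set h].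

Lemma U_cases X h : (U X h = [set h] /\ PT X h = set0) \/
   (U X h \in PT X h /\ forall S, S \in PT X h -> #|S| <= #|U X h|).
Proof.
rewrite /U; case: pickP => [T0 T0P|none].
  right; case: arg_maxnP => //.
left; split=> //; apply/setP=> x; rewrite inE; exact: none.
Qed.

Lemma U_in X h : h \in X -> h \in U X h /\ U X h \subset X.
Proof.
move=> hX; case: (U_cases X h) => [[-> _]|[/imsetP[D] ]].
  by rewrite set11 sub1set.
by rewrite inE => /andP[_ /andP[hD _]] -> _; rewrite inE hD hX subsetIr.
Qed.

Lemma U_max X h D : D \in F -> h \in D -> ~~ (X \subset D) -> h \in X ->
  D :&: X \subset U X h.
Proof.
move=> DF hD XD hX.
have DP : D :&: X \in PT X h by apply/imsetP; exists D => //; rewrite inE DF hD XD.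
case: (U_cases X h) => [[_ E]|[/imsetP[D2] ]].
  by rewrite E inE in DP.
rewrite inE => /andP[D2F /andP[hD2 XD2]] -> mx.
have := mx _ DP; case/or3P: (lamF DF D2F) => [s|s|dj] c.
- exact: setSI.
- have s2 : D2 :&: X \subset D :&: X by exact: setSI.
  have E : D2 :&: X = D :&: X by apply/eqP; rewrite eqEcard s2 c.
  by rewrite E.
- by rewrite (disjointFr dj hD) in hD2.
Qed.

Lemma PT_prop X h S : S \in PT X h -> exists D, [/\ D \in F, h \in D, ~~ (X \subset D) & S = D :&: X].
Proof. by case/imsetP=> D; rewrite inE => /andP[DF /andP[hD XD]] ->; exists D. Qed.

Lemma U_disj X y z : y \in X -> z \in X -> z \notin U X y -> [disjoint U X z & U X y].
Proof.
move=> yX zX zU; rewrite disjoint_subset; apply/subsetP=> w wz; rewrite inE; apply/negP=> wy.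
case: (U_cases X z) wz => [[-> _]|[/PT_prop[D1 [D1F zD1 XD1 ->]] _]].
  by rewrite inE => /eqP wE; rewrite -wE wy in zU.
rewrite inE => /andP[wD1 wX].
case: (U_cases X y) wy zU => [[Ey _]|[/PT_prop[D2 [D2F yD2 XD2 Ey]] _]].
  rewrite Ey inE => /eqP wE; subst w => zU.
  have := U_max D1F wD1 XD1 yX; move/subsetP/(_ z); rewrite inE zD1 zX => /(_ isT).
  by move=> zz; rewrite -Ey zz in zU.
rewrite Ey inE => /andP[wD2 _] zU.
case/or3P: (lamF D1F D2F) => [s|s|dj].
- by rewrite inE (subsetP s _ zD1) zX in zU.
- have yD1 := subsetP s _ yD2.
  have := U_max D1F yD1 XD1 yX; move/subsetP/(_ z); rewrite inE zD1 zX => /(_ isT).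
  by rewrite Ey => zz; rewrite zz in zU.
- by rewrite (disjointFr dj wD1) in wD2.
Qed.

Lemma U_bound X x0 : x0 \in X -> exists h, h \in X /\ 2 * #|U X h| <= #|X| + 1.
Proof.
move=> x0X; have X1 : 0 < #|X| by apply/card_gt0P; exists x0.
case: (U_cases X x0) => [[E _]|[UP _]].
  by exists x0; rewrite E cards1; split=> //; lia.
case: (leqP (2 * #|U X x0|) (#|X| + 1)) => big; first by exists x0.
have [D [DF x0D XD E]] := PT_prop UP.
have [z zX zD] := subsetPn XD.
have zU : z \notin U X x0 by rewrite E inE (negbTE zD).
exists z; split=> //.
have dj := U_disj x0X zX zU.
have [_ s1] := U_in zX; have [_ s2] := U_in x0X.
have : #|U X z :|: U X x0| <= #|X| by apply: subset_leq_card; rewrite subUset s1 s2.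
rewrite cardsU (disjoint_setI0 dj) cards0; lia.
Qed.

Lemma Up_prepend X Y h : Up Y -> Y \subset X :\: U X h -> h \in X ->
  (forall y, y \in Y -> h < y) -> Up (h |: Y).
Proof.
move=> uY sY hX hlt D DF.
case: (boolP (X \subset D)) => XD.
  left=> x y _ yY _ _; case/setU1P: yY => [->|yY]; first exact: (subsetP XD).
  by have := subsetP sY _ yY; rewrite inE => /andP[_ /(subsetP XD)].
case: (boolP (h \in D)) => hD.
  right; have sub := U_max DF hD XD hX.
  have -> : D :&: (h |: Y) = [set h].
    apply/setP=> x; rewrite !inE; apply/idP/idP.
      case/andP=> xD /orP[//|xY].
      have := subsetP sY _ xY; rewrite !inE => /andP[xU xX].
      by have := subsetP sub x; rewrite inE xD xX => /(_ isT) xU'; rewrite xU' in xU.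
    by move/eqP->; rewrite hD eqxx.
  by rewrite cards1.
case: (uY D DF) => [up|c].
  left=> x y xY yY xy xD.
  case/setU1P: xY => [xh|xY]; first by rewrite -xh xD in hD.
  case/setU1P: yY => [yh|yY].
    by have := hlt _ xY; rewrite -yh; lia.
  exact: up xY yY xy xD.
right; apply: leq_trans c; apply: subset_leq_card; apply/subsetP=> x.
rewrite !inE => /andP[xD /orP[/eqP xh|->]]; last by rewrite xD.
by rewrite -xh xD in hD.
Qed.

Lemma Down_append X Y h : Down Y -> Y \subset X :\: U X h -> h \in X ->
  (forall y, y \in Y -> y < h) -> Down (h |: Y).
Proof.
move=> uY sY hX hlt D DF.
case: (boolP (X \subset D)) => XD.
  left=> x y xY _ _ _; case/setU1P: xY => [->|xY]; first exact: (subsetP XD).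
  by have := subsetP sY _ xY; rewrite inE => /andP[_ /(subsetP XD)].
case: (boolP (h \in D)) => hD.
  right; have sub := U_max DF hD XD hX.
  have -> : D :&: (h |: Y) = [set h].
    apply/setP=> x; rewrite !inE; apply/idP/idP.
      case/andP=> xD /orP[//|xY].
      have := subsetP sY _ xY; rewrite !inE => /andP[xU xX].
      by have := subsetP sub x; rewrite inE xD xX => /(_ isT) xU'; rewrite xU' in xU.
    by move/eqP->; rewrite hD eqxx.
  by rewrite cards1.
case: (uY D DF) => [up|c].
  left=> x y xY yY xy yD.
  case/setU1P: yY => [yh|yY]; first by rewrite -yh yD in hD.
  case/setU1P: xY => [xh|xY].
    by have := hlt _ yY; rewrite -xh; lia.
  exact: up xY yY xy yD.
right; apply: leq_trans c; apply: subset_leq_card; apply/subsetP=> x.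
rewrite !inE => /andP[xD /orP[/eqP xh|->]]; last by rewrite xD.
by rewrite -xh xD in hD.
Qed.

Definition NN a b := 5 ^ (a + b).

Lemma LAM a b X : NN a b <= #|X| -> exists Y, Y \subset X /\
  ((Up Y /\ a <= #|Y|) \/ (Down Y /\ b <= #|Y|)).
Proof.
have Up0 : Up set0 by move=> D _; right; rewrite setI0 cards0.
have Down0 : Down set0 by move=> D _; right; rewrite setI0 cards0.
elim: a b X => [|a IHa] b X.
  by move=> _; exists set0; rewrite sub0set; split=> //; left.
elim: b X => [|b IHb] X.
  by move=> _; exists set0; rewrite sub0set; split=> //; right.
move=> NX.
have [x0 x0X] : exists x0 : T, x0 \in X.
  apply/set0Pn; rewrite -card_gt0; apply: leq_trans NX; by rewrite /NN expn_gt0.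
have [h [hX hb]] := U_bound x0X.
set W := X :\: U X h.
set Wr := [set x in W | h < x]; set Wl := [set x in W | x < h].
have [hU _] := U_in hX.
have cW : #|W| = #|Wr| + #|Wl|.
  rewrite -cardsUI.
  have -> : Wr :&: Wl = set0 by apply/setP=> x; rewrite !inE; case: (ltngtP (nat_of_ord h) (nat_of_ord x)); rewrite ?andbF ?andbT //=.
  have -> : Wr :|: Wl = W.
    apply/setP=> x; rewrite !inE.
    case: (ltngtP (nat_of_ord h) (nat_of_ord x)) => hx; rewrite ?andbT ?andbF ?orbF //=.
    have -> : x = h by apply: val_inj.
    by rewrite hU.
  by rewrite cards0 addn0.
have cW2 : #|X| <= #|W| + #|U X h|.
  rewrite /W; have := cardsID (U X h) X.
  have : #|X :&: U X h| <= #|U X h| by apply: subset_leq_card; apply: subsetIr.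
  lia.
have WrW : Wr \subset W by apply/subsetP=> x; rewrite inE => /andP[].
have WlW : Wl \subset W by apply/subsetP=> x; rewrite inE => /andP[].
have WX : W \subset X by apply: subsetDl.
case: (leqP (NN a b.+1) #|Wr|) => cr.
  have [Y [YW [[uY aY]|[dY bY]]]] := IHa b.+1 Wr cr.
    exists (h |: Y); split.
      by rewrite subUset sub1set hX (subset_trans YW (subset_trans WrW WX)).
    left; split.
      apply: (Up_prepend uY (subset_trans YW WrW) hX).
      by move=> y /(subsetP YW); rewrite inE => /andP[].
    rewrite cardsU1; have : h \notin Y.
      by apply/negP=> /(subsetP YW); rewrite inE ltnn andbF.
    by move=> ->.
  by exists Y; split; [apply: (subset_trans YW (subset_trans WrW WX)) | right].
have cl : NN a.+1 b <= #|Wl|.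
  move: NX; rewrite /NN !addSn addnS !expnS => NX.
  have : 5 ^ (a + b) <= 5 * 5 ^ (a + b) by rewrite leq_pmull.
  move: cr; rewrite /NN addnS expnS; lia.
have [Y [YW [[uY aY]|[dY bY]]]] := IHb Wl cl.
  by exists Y; split; [apply: (subset_trans YW (subset_trans WlW WX)) | left].
exists (h |: Y); split.
  by rewrite subUset sub1set hX (subset_trans YW (subset_trans WlW WX)).
right; split.
  apply: (Down_append dY (subset_trans YW WlW) hX).
  by move=> y /(subsetP YW); rewrite inE => /andP[].
rewrite cardsU1; have : h \notin Y.
  by apply/negP=> /(subsetP YW); rewrite inE ltnn andbF.
by move=> ->.
Qed.
End Lam.

Section G.
Variables (V E : finType) (src dst : E -> V).
Hypothesis lless : loopless src dst.
Notation joins := (joins src dst).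
Notation is_walk := (is_walk src dst).
Notation is_path_in := (is_path_in src dst).
Notation sub_adj := (sub_adj src dst).

Lemma joinsC e x y : joins e x y = joins e y x.
Proof. by rewrite /Defs.joins orbC. Qed.

Lemma joins_ends e x y : joins e x y -> (x == src e) || (x == dst e).
Proof. by rewrite /Defs.joins => /orP[/andP[/eqP-> _]|/andP[_ /eqP->]]; rewrite eqxx ?orbT. Qed.

Lemma joins_ends2 e x y : joins e x y -> (y == src e) || (y == dst e).
Proof. by rewrite joinsC; apply: joins_ends. Qed.

Lemma joins_self e : joins e (src e) (dst e).
Proof. by rewrite /Defs.joins !eqxx. Qed.

Variable VT : {set V}.
Implicit Types (S : {set E}) (x y z : V).
Definition conn (S : {set E}) := connect (sub_adj VT S).

Lemma sub_adj_sym S : symmetric (sub_adj VT S).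
Proof.
move=> x y; rewrite /Defs.sub_adj andbCA; congr (_ && (_ && _)).
by apply: eq_existsb=> e; rewrite joinsC.
Qed.

Lemma conn_sym S x y : conn S x y = conn S y x.
Proof. by apply: sym_connect_sym; apply: sub_adj_sym. Qed.

Lemma conn_trans S x y z : conn S x y -> conn S y z -> conn S x z.
Proof. exact: connect_trans. Qed.

Lemma conn_mono S1 S2 x y : S1 \subset S2 -> conn S1 x y -> conn S2 x y.
Proof.
move=> sub; apply: connect_sub => u v /and3P[uV vV /existsP[e /andP[eS j]]].
apply: connect1; rewrite /Defs.sub_adj uV vV; apply/existsP; exists e.
by rewrite (subsetP sub _ eS).
Qed.

Lemma conn_K S f x y : conn S x y ->
  [\/ conn (S :\ f) x y, conn (S :\ f) x (src f) | conn (S :\ f) x (dst f)].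
Proof.
move=> /connectP[p pp ->]; elim: p x pp => [|v p IH] x /=.
  by move=> _; constructor 1; apply: connect0.
case/andP=> /and3P[xV vV /existsP[e /andP[eS j]]] /IH.
case: (eqVneq e f) => [ef|nef].
  move=> _; move: j; rewrite ef => /joins_ends /orP[/eqP->|/eqP->].
    by constructor 2; apply: connect0.
  by constructor 3; apply: connect0.
have a : conn (S :\ f) x v.
  apply: connect1; rewrite /Defs.sub_adj xV vV; apply/existsP; exists e.
  by rewrite !inE nef eS.
by case=> h; [constructor 1|constructor 2|constructor 3]; apply: conn_trans h.
Qed.

Lemma path_walk S x p : path (sub_adj VT S) x p ->
  exists s, [/\ is_walk x (last x p) s, map snd s = p & all (fun st => st.1 \in S) s].
Proof.
elim: p x => [|v p IH] x /=.
  by move=> _; exists [::]; split=> //=.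
case/andP=> /and3P[xV vV /existsP[e /andP[eS j]]] /IH[s [w ms al]].
by exists ((e, v) :: s); split=> //=; [rewrite j w | rewrite ms | rewrite eS al].
Qed.

Lemma conn_path S x y : conn S x y -> exists s, is_path_in S x y s.
Proof.
move=> /connectP[p pp ->].
case: (shortenP pp) => p' pp' up' _.
have [s [w ms al]] := path_walk pp'.
by exists s; rewrite /Defs.is_path_in w ms up' al.
Qed.

Lemma walk_conn S x y s : x \in VT -> (forall e, e \in S -> src e \in VT /\ dst e \in VT) ->
  is_walk x y s -> all (fun st => st.1 \in S) s -> conn S x y.
Proof.
move=> + ends; elim: s x => [|[e v] s IH] x xV /=.
  by move=> /eqP-> _; apply: connect0.
case/andP=> j w /andP[eS al].
have vV : v \in VT.
  by have [h1 h2] := ends _ eS; case/orP: (joins_ends2 j) => /eqP->.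
apply: (conn_trans (y := v)); last exact: IH.
apply: connect1; rewrite /Defs.sub_adj xV vV; apply/existsP; exists e; by rewrite eS.
Qed.

Lemma walk_edge_in x y s e : is_walk x y s -> e \in map fst s ->
  exists a b, [/\ a \in x :: map snd s, b \in map snd s & joins e a b].
Proof.
elim: s x => [|[f v] s IH] x //=.
case/andP=> j w; rewrite inE => /orP[/eqP ef|es].
  by exists x, v; rewrite ef !inE !eqxx j.
have [a [b [ai bi jj]]] := IH _ w es.
exists a, b; split=> //; first by rewrite inE ai orbT.
by rewrite inE bi orbT.
Qed.

Lemma walk_uniq_edges x y s : is_walk x y s -> uniq (x :: map snd s) -> uniq (map fst s).
Proof.
elim: s x => [|[e v] s IH] x //=.
case/andP=> j w /andP[xn un]; rewrite (IH _ w un) andbT.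
apply/negP=> es; have [a [b [ai bi jj]]] := walk_edge_in w es.
move: xn; rewrite inE negb_or => /andP[xv xs].
have : (x == a) || (x == b).
  move: jj; rewrite /Defs.joins; case/orP: (joins_ends j) => /eqP ->.
    by case/orP=> /andP[-> _]; rewrite ?orbT.
  by case/orP=> /andP[_ ->]; rewrite ?orbT.
case/orP=> /eqP xe.
  by move: ai; rewrite -xe inE (negbTE xv) (negbTE xs).
by move: bi; rewrite -xe (negbTE xs).
Qed.


Lemma walk_split x y s e : is_walk x y s -> e \in map fst s ->
  exists s1 s2 u v, [/\ s = s1 ++ (e, v) :: s2, is_walk x u s1, joins e u v & is_walk v y s2].
Proof.
elim: s x => [|[f w] s IH] x //=.
case/andP=> j wk; rewrite inE => /orP[/eqP ef|es].
  by subst f; exists [::], s, x, w; split=> //=.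
have [s1 [s2 [u [v [-> w1 j2 w2]]]]] := IH _ wk es.
by exists ((f, w) :: s1), s2, u, v; split=> //=; rewrite j w1.
Qed.

Variable ET : {set E}.
Hypothesis tree : is_tree src dst VT ET.

Lemma tree_ends e : e \in ET -> src e \in VT /\ dst e \in VT.
Proof. by case: tree => _ h _ _; apply: h. Qed.

Definition side e v := conn (ET :\ e) (src e) v.

Lemma side_conn e u v : conn (ET :\ e) u v -> side e u = side e v.
Proof.
move=> uv; apply/idP/idP=> h; first exact: conn_trans uv.
by apply: conn_trans h _; rewrite conn_sym.
Qed.

Lemma side_two e v : e \in ET -> v \in VT -> side e v \/ conn (ET :\ e) (dst e) v.
Proof.
move=> eT vV; have [sV dV] := tree_ends eT.
case: tree => _ _ cn _.
have : conn ET v (src e) by apply: cn.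
case/(conn_K e) => h.
- by left; rewrite /side conn_sym.
- by left; rewrite /side conn_sym.
- by right; rewrite conn_sym.
Qed.

Lemma bridge e : e \in ET -> ~~ side e (dst e).
Proof.
move=> eT; apply/negP=> sd.
case: tree => _ _ _ mn; apply: (mn e eT) => x y xV yV.
have hx : conn (ET :\ e) (src e) x.
  by case: (side_two eT xV) => // h; apply: conn_trans sd h.
have hy : conn (ET :\ e) (src e) y.
  by case: (side_two eT yV) => // h; apply: conn_trans sd h.
by apply: conn_trans hy; rewrite conn_sym.
Qed.

Lemma side_src e : side e (src e).
Proof. exact: connect0. Qed.

Lemma side_eq e u v : e \in ET -> u \in VT -> v \in VT ->
  conn (ET :\ e) u v = (side e u == side e v).
Proof.
move=> eT uV vV; apply/idP/idP; first by move/side_conn->.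
case: (boolP (side e u)) => su; case: (boolP (side e v)) => sv //= _.
  by apply: conn_trans sv; rewrite conn_sym.
case: (side_two eT uV) => [h|hu]; first by rewrite h in su.
case: (side_two eT vV) => [h|hv]; first by rewrite h in sv.
by apply: conn_trans hv; rewrite conn_sym.
Qed.

Lemma used_sep e x y s : e \in ET -> x \in VT -> is_path_in ET x y s ->
  e \in map fst s -> side e x != side e y.
Proof.
move=> eT xV /and3P[w un al] es.
have ue := walk_uniq_edges w un.
have [s1 [s2 [u [v [E1 w1 j w2]]]]] := walk_split w es.
move: ue al; rewrite E1 map_cat /= => U.
have n1 : e \notin map fst s1.
  by move: U; rewrite cat_uniq => /and3P[_ /hasPn H _]; exact: H _ (mem_head _ _).
have n2 : e \notin map fst s2 by move: U; rewrite cat_uniq => /and3P[_ _ /andP[]].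
rewrite all_cat /= => /and3P[a1 _ a2].
have b1 : all (fun st => st.1 \in ET :\ e) s1.
  apply/allP=> [[f z]] fz /=; rewrite !inE (allP a1 _ fz) andbT.
  by apply/negP=> /eqP fe; rewrite -fe (map_f fst fz) in n1.
have b2 : all (fun st => st.1 \in ET :\ e) s2.
  apply/allP=> [[f z]] fz /=; rewrite !inE (allP a2 _ fz) andbT.
  by apply/negP=> /eqP fe; rewrite -fe (map_f fst fz) in n2.
have ends' : forall f, f \in ET :\ e -> src f \in VT /\ dst f \in VT.
  by move=> f; rewrite inE => /andP[_]; apply: tree_ends.
have [sV dV] := tree_ends eT.
have vV : v \in VT by case/orP: (joins_ends2 j) => /eqP->.
have c1 := walk_conn xV ends' w1 b1.
have c2 := walk_conn vV ends' w2 b2.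
rewrite (side_conn c1) -(side_conn c2).
have bd := bridge eT.
have ss := side_src e.
by case/orP: j => /andP[/eqP<- /eqP<-]; move: bd ss; case: (side e (dst e)); case: (side e (src e)).
Qed.

Variables (m : nat) (phi : 'I_m -> V) (r0 : 'I_m).
Hypothesis phiV : forall i, phi i \in VT.

Definition Dset e : {set 'I_m} := [set i | side e (phi i) != side e (phi r0)].
Definition Fam := [set Dset e | e in ET].

Lemma mono_ee e f x y : conn ((ET :\ e) :\ f) x y -> conn (ET :\ e) x y.
Proof. by apply: conn_mono; apply: subsetDl. Qed.

Lemma mono_ef e f x y : conn ((ET :\ e) :\ f) x y -> conn (ET :\ f) x y.
Proof. by apply: conn_mono; apply/subsetP=> g; rewrite !inE => /and3P[-> _ ->]. Qed.

Lemma Fam_lam A B : A \in Fam -> B \in Fam -> [|| A \subset B, B \subset A | [disjoint A & B]].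
Proof.
case/imsetP=> e eT ->; case/imsetP=> f fT ->.
case: (eqVneq e f) => [<-|nef]; first by rewrite subxx.
have [sfV dfV] := tree_ends fT.
have sd : side e (src f) = side e (dst f).
  apply: side_conn; apply: connect1; rewrite /Defs.sub_adj sfV dfV; apply/existsP; exists f.
  by rewrite !inE eq_sym nef fT joins_self.
have rV := phiV r0.
case: (eqVneq (side e (src f)) (side e (phi r0))) => [sA|sB].
  have claim : forall i j, i \in Dset e -> j \in Dset e -> side f (phi i) = side f (phi j).
    move=> i j; rewrite !inE => di dj.
    have : conn (ET :\ e) (phi i) (phi j).
      by rewrite side_eq // ?phiV //; move: di dj; case: (side e (phi i)); case: (side e (phi j)); case: (side e (phi r0)).
    case/(conn_K f) => [h|h|h]; first by apply: side_conn; apply: mono_ef h.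
      by move: di; rewrite (side_conn (mono_ee h)) sA eqxx.
    by move: di; rewrite (side_conn (mono_ee h)) -sd sA eqxx.
  case: (boolP [disjoint Dset e & Dset f]) => dj; first by apply/or3P; constructor 3.
  move: dj; rewrite -setI_eq0 => /set0Pn[i]; rewrite inE => /andP[ie iff].
  apply/or3P; constructor 1; apply/subsetP=> j je.
  by move: iff; rewrite !inE (claim _ _ ie je).
apply/or3P; constructor 2; apply/subsetP=> j; apply: contraTT.
rewrite !inE !negbK => /eqP sj.
have : conn (ET :\ e) (phi j) (phi r0) by rewrite side_eq // ?phiV // sj.
case/(conn_K f) => [h|h|h]; first by rewrite (side_conn (mono_ef h)).
  by move: sB; rewrite -(side_conn (mono_ee h)) sj eqxx.
by move: sB; rewrite sd -(side_conn (mono_ee h)) sj eqxx.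
Qed.

Lemma sep_Dset e i j : e \in ET -> (side e (phi i) != side e (phi j)) = ((i \in Dset e) != (j \in Dset e)).
Proof. by move=> _; rewrite !inE; case: (side e (phi i)); case: (side e (phi j)); case: (side e (phi r0)). Qed.
End G.

Section Cyc.
Variables (V E : finType) (src dst : E -> V).
Hypothesis lless : loopless src dst.
Variables (m p : nat) (phi : 'I_m -> V) (EC : {set E}) (e0 : E).
Hypothesis m3 : 2 < m.
Hypothesis copy : is_Ctr_copy src dst p phi EC.

Lemma m0 : 0 < m. Proof. by apply: leq_trans m3. Qed.
Definition ix (t : nat) : 'I_m := Ordinal (ltn_pmod t m0).
Definition Cset (i : 'I_m) := [set e in EC | joins src dst e (phi i) (phi (ordS i))].
Definition ce (i : 'I_m) (k : nat) := nth e0 (enum (Cset i)) k.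
Definition arcn s L k := [seq (ce (ix t) k, phi (ix t.+1)) | t <- iota s L].

Lemma ixS t : ordS (ix t) = ix t.+1.
Proof. by apply: val_inj => /=; rewrite -addn1 modnDml addn1. Qed.

Lemma phi_inj : injective phi. Proof. by case: copy. Qed.

Lemma ce_prop i k : k < p -> ce i k \in EC /\ joins src dst (ce i k) (phi i) (phi (ordS i)).
Proof.
move=> kp; case: copy => _ _ /(_ i) c.
have : ce i k \in Cset i by rewrite -mem_enum /ce mem_nth // -cardE c.
by rewrite inE => /andP[].
Qed.

Lemma ordSS_neq (i : 'I_m) : ordS (ordS i) != i.
Proof.
apply/eqP=> /(congr1 val) /=; have := ltn_ord i.
case: (ltngtP i.+1 m) => h.
- rewrite (modn_small h) => _.
  case: (ltngtP i.+2 m) => h2; first by rewrite (modn_small h2); lia.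
    lia.
  by rewrite h2 modnn; lia.
- lia.
- by rewrite h modnn modn_small //; lia.
Qed.

Lemma ce_inj i i' k k' : k < p -> k' < p -> ce i k = ce i' k' -> i = i' /\ k = k'.
Proof.
move=> kp kp' E1.
have [_ j1] := ce_prop i kp; have [_ j2] := ce_prop i' kp'.
have Sinj : injective (@ordS m) by apply: can_inj (@ordSK m).
have ii : i = i'.
  move: j1 j2; rewrite E1 /Defs.joins.
  case/orP=> /andP[/eqP a1 /eqP b1] /orP[] /andP[/eqP a2 /eqP b2].
  - by apply: phi_inj; rewrite -a1 -a2.
  - have h1 : i = ordS i' by apply: phi_inj; rewrite -a1 -a2.
    have h2 : ordS i = i' by apply: phi_inj; rewrite -b1 -b2.
    by have := ordSS_neq i'; rewrite -h1 h2 eqxx.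
  - have h1 : ordS i = i' by apply: phi_inj; rewrite -a1 -a2.
    have h2 : i = ordS i' by apply: phi_inj; rewrite -b1 -b2.
    by have := ordSS_neq i'; rewrite -h2 h1 eqxx.
  - by apply: Sinj; apply: phi_inj; rewrite -a1 -a2.
split=> //; subst i'.
case: copy => _ _ /(_ i) c.
move: E1; rewrite /ce; move/eqP; rewrite nth_uniq ?enum_uniq -?cardE ?c //.
by move/eqP.
Qed.

Lemma ix_val t : val (ix t) = t %% m. Proof. by []. Qed.

Lemma arc_walk s L k : k < p -> is_walk src dst (phi (ix s)) (phi (ix (s + L))) (arcn s L k).
Proof.
move=> kp; elim: L s => [|L IH] s /=; first by rewrite addn0.
have [_ j] := ce_prop (ix s) kp.
rewrite ixS in j; rewrite j /=; rewrite addnS -addSn; exact: IH.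
Qed.

Lemma arc_all s L k : k < p -> all (fun st => st.1 \in EC) (arcn s L k).
Proof.
move=> kp; apply/allP=> st /mapP[t _ ->] /=.
by have [] := ce_prop (ix t) kp.
Qed.

Lemma mod_inj_range s L t t' : L < m -> s <= t <= s + L -> s <= t' <= s + L ->
  t %% m = t' %% m -> t = t'.
Proof.
move=> Lm ht ht' E1.
wlog le : t t' ht ht' E1 / t <= t'.
  by move=> W; case: (leqP t t') => h; [apply: W|apply/esym/W => //; apply: ltnW].
have : m %| t' - t by rewrite -eqn_mod_dvd // E1.
case: (posnP (t' - t)) => [z|pos]; first by lia.
move/(dvdn_leq pos); lia.
Qed.

Lemma arc_uniq s L k : L < m -> uniq (phi (ix s) :: map snd (arcn s L k)).
Proof.
move=> Lm.
have -> : phi (ix s) :: map snd (arcn s L k) = map (fun t => phi (ix t)) (iota s L.+1).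
  rewrite /arcn /= -map_comp; congr (_ :: _).
  by rewrite -add1n iotaDl -map_comp; apply: eq_map => t /=; rewrite add1n.
rewrite map_inj_in_uniq ?iota_uniq // => t t'; rewrite !mem_iota => ht ht' /phi_inj E1.
apply: (mod_inj_range (s := s) (L := L)) => //; try lia.
by rewrite -!ix_val E1.
Qed.

Lemma arc_edges s L k e : e \in map fst (arcn s L k) -> exists2 t, s <= t < s + L & e = ce (ix t) k.
Proof.
by rewrite /arcn -map_comp => /mapP[t]; rewrite mem_iota => ht ->; exists t.
Qed.

Lemma ix_ord (i : 'I_m) : ix i = i.
Proof. by apply: val_inj; rewrite /= modn_small. Qed.

Section Assemble.
Variables (n : nat) (w : 'I_n -> 'I_m) (S : {set E}) (T : 'I_n -> seq (E * V)).
Hypothesis n2 : 1 < n.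
Hypothesis wmono : forall j j' : 'I_n, j < j' -> w j < w j'.
Hypothesis ECS : EC \subset S.
Hypothesis Tpath : forall j, is_path_in src dst S (phi (w j)) (phi (w (ordS j))) (T j).
Hypothesis TEC : forall j e, e \in map fst (T j) -> e \notin EC.
Hypothesis Tdisj : forall j j', j != j' -> forall e, e \in map fst (T j) -> e \notin map fst (T j').

Definition Lj (j : 'I_n) := (w (ordS j) + m - w j) %% m.

Lemma wle (j j' : 'I_n) : j <= j' -> w j <= w j'.
Proof.
rewrite leq_eqVlt => /orP[/eqP E1|lt]; last by apply: ltnW; apply: wmono.
by have -> : j = j' by apply: val_inj.
Qed.

Lemma ordS_val (j : 'I_n) : val (ordS j) = if j.+1 < n then j.+1 else 0.
Proof.
rewrite /=; case: ifP => h; first by rewrite modn_small.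
have -> : j.+1 = n by have := ltn_ord j; lia.
by rewrite modnn.
Qed.

Lemma arc_end j : ix (w j + Lj j) = w (ordS j).
Proof.
apply: val_inj; rewrite /= /Lj modnDmr.
have -> : w j + (w (ordS j) + m - w j) = w (ordS j) + m by have := ltn_ord (w j); lia.
by rewrite modnDr modn_small.
Qed.

Definition inblock (j : 'I_n) r :=
  if j.+1 < n then (w j <= r) && (r < w (ordS j)) else (w j <= r) || (r < w (ordS j)).

Lemma block_range (j : 'I_n) t : w j <= t < w j + Lj j -> inblock j (t %% m).
Proof.
move=> ht; rewrite /inblock; have hv := ordS_val j.
have wjm := ltn_ord (w j); have wsm := ltn_ord (w (ordS j)).
case: ifP hv => h hv.
  have lt : w j < w (ordS j) by apply: wmono; rewrite hv.
  have LE : Lj j = w (ordS j) - w j.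
    rewrite /Lj; have -> : w (ordS j) + m - w j = m + (w (ordS j) - w j) by lia.
    by rewrite modnDl modn_small //; lia.
  rewrite LE in ht; rewrite modn_small; lia.
have lt : w (ordS j) < w j.
  by apply: wmono; rewrite hv; have := ltn_ord j; lia.
have LE : Lj j = w (ordS j) + m - w j by rewrite /Lj modn_small //; lia.
rewrite LE in ht.
case: (ltnP t m) => tm; first by rewrite modn_small //; apply/orP; left; lia.
have -> : t = m + (t - m) by lia.
rewrite modnDl modn_small; last by lia.
by apply/orP; right; lia.
Qed.

Lemma block_disj (j j' : 'I_n) r : j != j' -> inblock j r -> inblock j' r -> False.
Proof.
wlog lt : j j' / j < j'.
  move=> W ne; case: (ltngtP j j') => h; first exact: W.
    by move=> a b; apply: (W j' j) => //; rewrite eq_sym.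
  by move: ne; rewrite (val_inj h) eqxx.
move=> _; rewrite /inblock.
have hn : j.+1 < n by have := ltn_ord j'; lia.
rewrite hn => /andP[a b].
have hv := ordS_val j; rewrite hn in hv.
have c : w (ordS j) <= w j' by apply: wle; rewrite hv.
case: ifP => h'.
  by case/andP; lia.
have hv' := ordS_val j'; rewrite h' in hv'.
have d : w (ordS j') <= w j by apply: wle; rewrite hv'.
by case/orP; lia.
Qed.

Lemma assemble : immerses_Ctr src dst p.+1 n S.
Proof.
pose P (h : 'I_n * 'I_p.+1) := if h.2 < p then arcn (w h.1) (Lj h.1) h.2 else T h.1.
exists (fun j => phi (w j)), P; split.
- move=> j j' /phi_inj E1; apply/eqP; apply: contraT => ne.
  case: (ltngtP j j') => h.
  + by have := wmono h; rewrite E1 ltnn.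
  + by have := wmono h; rewrite E1 ltnn.
  + by rewrite (val_inj h) eqxx in ne.
- case=> j k /=; rewrite /P /=; case: ifP => kp; last exact: Tpath.
  rewrite /Defs.is_path_in; apply/and3P; split.
  + by have := arc_walk (w j) (Lj j) kp; rewrite arc_end ix_ord.
  + by have := @arc_uniq (w j) (Lj j) k; rewrite ix_ord; apply; rewrite /Lj ltn_pmod // m0.
  + by apply/allP=> st sa; apply: (subsetP ECS); exact: (allP (arc_all _ _ kp) _ sa).
- case=> j k; case=> j' k' ne e; rewrite /P /=.
  case: ifP => kp; case: ifP => kp'.
  + move=> /arc_edges[t ht ->]; apply/negP=> /arc_edges[t' ht' E1].
    have [E2 E3] := ce_inj kp kp' E1.
    have jj : j != j'.
      apply: contraNneq ne => jj; apply/eqP; congr (_, _) => //; exact: val_inj.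
    apply: (block_disj jj (block_range ht)).
    by rewrite -ix_val E2 ix_val; apply: block_range.
  + move=> ea; apply/negP=> et.
    have := TEC et; have := allP (arc_all (w j) (Lj j) kp).
    by move: ea => /mapP[st sa ->] /(_ _ sa) ->.
  + move=> et; apply/negP=> ea.
    have := TEC et; have := allP (arc_all (w j') (Lj j') kp').
    by move: ea => /mapP[st sa ->] /(_ _ sa) ->.
  + have kk : k = k'.
      apply: val_inj => /=; have := ltn_ord k; have := ltn_ord k'; have := negbT kp; have := negbT kp'; rewrite -!leqNgt; lia.
    apply: Tdisj; apply: contraNneq ne => jj; by rewrite jj kk.
Qed.
End Assemble.
End Cyc.

Lemma tree_disj (V E : finType) (src dst : E -> V) (VT : {set V}) (ET : {set E}) m
  (phi : 'I_m -> V) (r0 : 'I_m) :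
  is_tree src dst VT ET -> (forall i, phi i \in VT) ->
  forall Y : {set 'I_m},
  Up (Fam src dst VT ET phi r0) Y \/ Down (Fam src dst VT ET phi r0) Y ->
  forall (x y z u : 'I_m) s1 s2, x \in Y -> y \in Y -> z \in Y -> u \in Y ->
  x < y -> y < z -> z < u ->
  is_path_in src dst ET (phi x) (phi y) s1 -> is_path_in src dst ET (phi z) (phi u) s2 ->
  forall e, e \in map fst s1 -> e \notin map fst s2.
Proof.
move=> tr phiV Y UD x y z u s1 s2 xY yY zY uY xy yz zu p1 p2 e e1; apply/negP=> e2.
have eT : e \in ET.
  by move: p1 => /and3P[_ _ al]; case/mapP: e1 => st st1 ->; exact: (allP al _ st1).
have h1 := used_sep tr eT (phiV x) p1 e1; rewrite (sep_Dset _ _ _ _ r0) // in h1.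
have h2 := used_sep tr eT (phiV z) p2 e2; rewrite (sep_Dset _ _ _ _ r0) // in h2.
have DF : Dset src dst VT ET phi r0 e \in Fam src dst VT ET phi r0 by apply: imset_f.
move: DF h1 h2; move: (Dset src dst VT ET phi r0 e) => D DF h1 h2.
have two : forall a b, a \in D -> b \in D -> a \in Y -> b \in Y -> a < b -> 1 < #|D :&: Y|.
  move=> a b aD bD aY bY ab.
  have ne : a != b by apply/eqP=> E1; rewrite E1 ltnn in ab.
  have : #|[set a; b]| <= #|D :&: Y|.
    by apply: subset_leq_card; apply/subsetP=> c; rewrite in_set2 in_setI => /orP[]/eqP->; rewrite ?aD ?aY ?bD ?bY.
  by rewrite cards2 ne.
have card_case : #|D :&: Y| <= 1 -> False.
  move=> c.
  have a1 : (x \in D) || (y \in D) by move: h1; case: (x \in D); case: (y \in D).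
  have a2 : (z \in D) || (u \in D) by move: h2; case: (z \in D); case: (u \in D).
  have xz : x < z := ltn_trans xy yz.
  have yu : y < u := ltn_trans yz zu.
  have xu : x < u := ltn_trans xy yu.
  have : 1 < #|D :&: Y|.
    by case/orP: a1 => a; case/orP: a2 => b; apply: two a b _ _ _.
  by rewrite ltnNge c.
case: UD => [U|Dn].
  case: (U D DF) => [up|c]; last exact: card_case.
  have i1 : (x \in D) ==> (y \in D) by apply/implyP; exact: up.
  have i2 : (y \in D) ==> (z \in D) by apply/implyP; exact: up.
  have i3 : (z \in D) ==> (u \in D) by apply/implyP; exact: up.
  by move: h1 h2 i1 i2 i3; case: (x \in D); case: (y \in D); case: (z \in D); case: (u \in D).
case: (Dn D DF) => [dn|c]; last exact: card_case.
have i1 : (y \in D) ==> (x \in D) by apply/implyP; exact: dn.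
have i2 : (z \in D) ==> (y \in D) by apply/implyP; exact: dn.
have i3 : (u \in D) ==> (z \in D) by apply/implyP; exact: dn.
by move: h1 h2 i1 i2 i3; case: (x \in D); case: (y \in D); case: (z \in D); case: (u \in D).
Qed.

Lemma tree_path (V E : finType) (src dst : E -> V) (VT : {set V}) (ET : {set E}) x y :
  is_tree src dst VT ET -> x \in VT -> y \in VT -> exists s, is_path_in src dst ET x y s.
Proof. by case=> _ _ cn _ xV yV; apply: (conn_path (VT := VT)); apply: cn. Qed.

Lemma path_mono (V E : finType) (src dst : E -> V) (S1 S2 : {set E}) x y s :
  S1 \subset S2 -> is_path_in src dst S1 x y s -> is_path_in src dst S2 x y s.
Proof.
move=> sub /and3P[w u a]; apply/and3P; split=> //.
by apply/allP=> st sa; apply: (subsetP sub); apply: (allP a).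
Qed.

Lemma path_edges (V E : finType) (src dst : E -> V) (S : {set E}) x y s e :
  is_path_in src dst S x y s -> e \in map fst s -> e \in S.
Proof. by move=> /and3P[_ _ al] /mapP[st st1 ->]; exact: (allP al _ st1). Qed.

Lemma key_lemma (V E : finType) (src dst : E -> V) (VTa VTb : {set V}) (ETa ETb ETc : {set E})
  m (phi : 'I_m -> V) (r0 : 'I_m) n (w : 'I_n -> 'I_m) (Y2 : {set 'I_m})
  (T : 'I_n -> seq (E * V)) :
  is_tree src dst VTa ETa -> is_tree src dst VTb ETb ->
  [disjoint ETa & ETb] -> [disjoint ETa & ETc] -> [disjoint ETb & ETc] ->
  (forall i, phi i \in VTa) -> (forall i, phi i \in VTb) ->
  Up (Fam src dst VTa ETa phi r0) Y2 \/ Down (Fam src dst VTa ETa phi r0) Y2 ->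
  Up (Fam src dst VTb ETb phi r0) Y2 \/ Down (Fam src dst VTb ETb phi r0) Y2 ->
  (forall j, w j \in Y2) -> (forall j j' : 'I_n, j < j' -> w j < w j') ->
  (forall j : 'I_n, is_path_in src dst
     (if j.+1 == n then ETc else if odd j then ETb else ETa) (phi (w j)) (phi (w (ordS j))) (T j)) ->
  forall (j j' : 'I_n) e, j < j' -> e \in map fst (T j) -> e \in map fst (T j') -> False.
Proof.
move=> ta tb dab dac dbc phiA phiB UD2A UD2B wY wmono TP j j' e jj ej ej'.
have oS (i : 'I_n) : i.+1 < n -> val (ordS i) = i.+1 by move=> h; rewrite /= modn_small.
have jn : j.+1 < n by have := ltn_ord j'; lia.
have jn' : (j.+1 == n) = false by apply/negbTE; rewrite neq_ltn jn.
have hj := path_edges (TP j) ej; have hj' := path_edges (TP j') ej'.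
rewrite jn' in hj.
have Pj := TP j; rewrite jn' in Pj.
case: (boolP (j'.+1 == n)) => j'n.
  rewrite j'n in hj'.
  by case: (odd j) hj => a; [rewrite (disjointFl dbc hj') in a|rewrite (disjointFl dac hj') in a].
have j'n' : j'.+1 < n by have := ltn_ord j'; move: j'n; lia.
have Pj' := TP j'; rewrite (negbTE j'n) in Pj' hj'.
have xy : w j < w (ordS j) by apply: wmono; rewrite oS.
have zu : w j' < w (ordS j') by apply: wmono; rewrite oS.
have yz : odd j = odd j' -> w (ordS j) < w j'.
  move=> par; apply: wmono; rewrite oS //.
  have : j.+1 != j' by apply/eqP=> E1; move: par; rewrite -E1 /=; case: (odd j).
  move=> ne; have := ltn_ord j; lia.
case: (boolP (odd j)) hj Pj yz => oj hj Pj yz; case: (boolP (odd j')) hj' Pj' yz => oj' hj' Pj' yz.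
- exact: (negP (tree_disj tb phiB UD2B (wY j) (wY (ordS j)) (wY j') (wY (ordS j')) xy (yz erefl) zu Pj Pj' ej)).
- by rewrite (disjointFr dab hj') in hj.
- by rewrite (disjointFl dab hj') in hj.
- exact: (negP (tree_disj ta phiA UD2A (wY j) (wY (ordS j)) (wY j') (wY (ordS j')) xy (yz erefl) zu Pj Pj' ej)).
Qed.

Unset Implicit Arguments.
Theorem lemma8p6 :
  forall n : nat, 3 <= n ->
  exists m : nat, 3 <= m /\
  forall (V E : finType) (src dst : E -> V), loopless src dst ->
  forall p : nat, 0 < p ->
  forall (phi : 'I_m -> V) (EC : {set E}),
    is_Ctr_copy src dst p phi EC ->
  forall (VTa VTb VTc : {set V}) (ETa ETb ETc : {set E}),
    is_tree src dst VTa ETa -> is_tree src dst VTb ETb -> is_tree src dst VTc ETc ->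
    [disjoint ETa & ETb] -> [disjoint ETa & ETc] -> [disjoint ETb & ETc] ->
    [disjoint ETa & EC] -> [disjoint ETb & EC] -> [disjoint ETc & EC] ->
    (forall i : 'I_m, [/\ phi i \in VTa, phi i \in VTb & phi i \in VTc]) ->
    immerses_Ctr src dst p.+1 n (EC :|: ETa :|: ETb :|: ETc).
Proof.
move=> n n3.
pose K := NN n n.
have K1 : 0 < K by rewrite /K /NN expn_gt0.
have m3 : 2 < NN K K.
  rewrite /NN; have : 0 < K + K by lia.
  case: (K + K) => // q _; rewrite expnS; have : 0 < 5 ^ q by rewrite expn_gt0.
  lia.
exists (NN K K); split => //.
move=> V E src dst lless p p0 phi EC copy VTa VTb VTc ETa ETb ETc ta tb tc
  dab dac dbc daC dbC dcC phiT.
pose r0 : 'I_(NN K K) := Ordinal (ltn_trans (isT : 0 < 2) m3).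
have phiA i : phi i \in VTa by case: (phiT i).
have phiB i : phi i \in VTb by case: (phiT i).
have phiC i : phi i \in VTc by case: (phiT i).
have [e0 _] : exists e0 : E, e0 \in EC.
  case: copy => _ _ /(_ r0) c.
  have : 0 < #|[set e in EC | joins src dst e (phi r0) (phi (ordS r0))]| by rewrite c.
  by case/card_gt0P=> e; rewrite inE => /andP[eEC _]; exists e.
pose FA := Fam src dst VTa ETa phi r0.
pose FB := Fam src dst VTb ETb phi r0.
have cardT : NN K K <= #|[set: 'I_(NN K K)]| by rewrite cardsT card_ord.
have [Y1 [_ H1]] := LAM (F := FA) (Fam_lam ta phiA) (a := K) (b := K) cardT.
have [UD1 K1'] : (Up FA Y1 \/ Down FA Y1) /\ K <= #|Y1|.
  by case: H1 => [[a b]|[a b]]; split=> //; [left|right].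
have [Y2 [sub21 H2]] := LAM (F := FB) (Fam_lam tb phiB) (a := n) (b := n) K1'.
have [UD2B n2] : (Up FB Y2 \/ Down FB Y2) /\ n <= #|Y2|.
  by case: H2 => [[a b]|[a b]]; split=> //; [left|right].
have UD2A : Up FA Y2 \/ Down FA Y2.
  by case: UD1 => h; [left; apply: Up_sub h sub21|right; apply: Down_sub h sub21].
pose sq := enum Y2.
have szq : n <= size sq by rewrite /sq -cardE.
pose w (j : 'I_n) := nth r0 sq j.
have wY j : w j \in Y2.
  by rewrite -mem_enum mem_nth // (leq_trans (ltn_ord j)).
have inc : sorted ltn (map val sq).
  rewrite /sq -[enum _](eq_filter (mem_enum _)).
  rewrite -(eq_filter (mem_map val_inj _)) -filter_map.
  by rewrite (sorted_filter ltn_trans) // unlock val_ord_enum iota_ltn_sorted.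
have wmono (j j' : 'I_n) : j < j' -> w j < w j'.
  move=> jj; rewrite /w -!(nth_map r0 (val r0) val) ?(leq_trans (ltn_ord _) szq) //.
  apply: (sorted_ltn_nth ltn_trans (val r0) inc) => //; rewrite inE size_map.
    exact: (leq_trans (ltn_ord _) szq).
  exact: (leq_trans (ltn_ord _) szq).
pose trE (j : 'I_n) := if j.+1 == n then ETc else if odd j then ETb else ETa.
have ex (j : 'I_n) : exists s, is_path_in src dst (trE j) (phi (w j)) (phi (w (ordS j))) s.
  rewrite /trE; case: ifP => _; first exact: (tree_path tc).
  by case: ifP => _; [apply: (tree_path tb)|apply: (tree_path ta)].
pose T j := xchoose (ex j).
have TP j : is_path_in src dst (trE j) (phi (w j)) (phi (w (ordS j))) (T j) := xchooseP (ex j).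
have oS (j : 'I_n) : j.+1 < n -> val (ordS j) = j.+1 by move=> h; rewrite /= modn_small.
have key (j j' : 'I_n) e : j < j' -> e \in map fst (T j) -> e \in map fst (T j') -> False.
  exact: (key_lemma ta tb dab dac dbc phiA phiB UD2A UD2B wY wmono TP).
apply: (assemble e0 m3 copy (w := w) (T := T)).
- lia.
- exact: wmono.
- by apply/subsetP=> e eE; rewrite !inE eE.
- move=> j; apply: path_mono (TP j); rewrite /trE.
  by apply/subsetP=> e; case: ifP => _; [|case: ifP => _]; rewrite !inE => ->; rewrite ?orbT.
- move=> j e ej; have := path_edges (TP j) ej; rewrite /trE.
  case: ifP => _; [|case: ifP => _] => h.
  + by rewrite (disjointFr dcC h).
  + by rewrite (disjointFr dbC h).
  + by rewrite (disjointFr daC h).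
- move=> j j' ne e ej; apply/negP=> ej'.
  case: (ltngtP j j') => h.
  + exact: key h ej ej'.
  + exact: key h ej' ej.
  + by rewrite (val_inj h) eqxx in ne.
Qed.
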